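(* For all $t\in\mathbb{R}$ and all $s\in[t+\tfrac13,\,t+\tfrac23)$, one has $\mathbf{R}(t)\cdot\mathbf{R}(s)\le 0$.
   Context: For $t\in[-\tfrac12,0)$ define points of $S^2\subset\mathbb{R}^3$: $\mathbf r_1(t)=\big(\tfrac{1}{\sqrt2},\,t,\,\sqrt{\tfrac12-t^2}\big)$, $\mathbf r_2(t)=\Big(-\tfrac{\frac12+t}{1+t},\,\tfrac1{\sqrt2},\,\tfrac1{\sqrt2}\tfrac{\sqrt{\frac12-t^2}}{1+t}\Big)$, $\mathbf r_3(t)=\mathbf r_1(t)\times\mathbf r_2(t)=\Big(-\tfrac1{\sqrt2}\tfrac{\sqrt{\frac12-t^2}}{1+t},\,-\sqrt{\tfrac12-t^2},\,\tfrac{\frac12+t+t^2}{1+t}\Big)$. Let $R_{\pi/2}$ be the rotation $(x,y,z)\mapsto(-y,x,z)$ (by $\pi/2$ about the $z$-axis). Define $\mathbf r_0:[0,\tfrac14)\to S^2$ by $\mathbf r_0(t)=\mathbf r_1(6t-\tfrac12)$ for $t\in[0,\tfrac1{12})$, $\mathbf r_0(t)=R_{\pi/2}^3\mathbf r_2(6t-1)$ for $t\in[\tfrac1{12},\tfrac16)$, $\mathbf r_0(t)=R_{\pi/2}^2\mathbf r_3(6t-\tfrac32)$ for $t\in[\tfrac16,\tfrac14)$. Define $\mathbf R:[0,1)\to S^2$ by $\mathbf R(t)=R_{\pi/2}^k\,\mathbf r_0(t-\tfrac k4)$ for $t\in[\tfrac k4,\tfrac{k+1}4)$, $k=0,1,2,3$,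 and extend $\mathbf R$ to $\mathbb R$ periodically with period $1$: $\mathbf R(t):=\mathbf R(t-\lfloor t\rfloor)$. *)

(* Defs.v *)
From Stdlib Require Import Reals Lra.
Open Scope R_scope.

Definition vec3 : Type := (R * R * R)%type.

Definition dot (u v : vec3) : R :=
  let '(u1, u2, u3) := u in let '(v1, v2, v3) := v in u1*v1 + u2*v2 + u3*v3.

Definition cross (u v : vec3) : vec3 :=
  let '(u1, u2, u3) := u in let '(v1, v2, v3) := v in
  (u2*v3 - u3*v2, u3*v1 - u1*v3, u1*v2 - u2*v1).

Definition rot (u : vec3) : vec3 := let '(x, y, z) := u in (- y, x, z).

Fixpoint rotn (k : nat) (u : vec3) : vec3 :=
  match k with O => u | S k' => rot (rotn k' u) end.

Definition r1 (t : R) : vec3 := (/ sqrt 2, t, sqrt (/2 - t^2)).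

Definition r2 (t : R) : vec3 :=
  (- ((/2 + t) / (1 + t)), / sqrt 2, / sqrt 2 * (sqrt (/2 - t^2) / (1 + t))).

Definition r3 (t : R) : vec3 := cross (r1 t) (r2 t).

Definition r0 (t : R) : vec3 :=
  if Rlt_dec t (1/12) then r1 (6*t - /2)
  else if Rlt_dec t (1/6) then rotn 3 (r2 (6*t - 1))
  else rotn 2 (r3 (6*t - 3/2)).

Definition Rloop0 (t : R) : vec3 :=
  if Rlt_dec t (1/4) then r0 t
  else if Rlt_dec t (2/4) then rotn 1 (r0 (t - 1/4))
  else if Rlt_dec t (3/4) then rotn 2 (r0 (t - 2/4))
  else rotn 3 (r0 (t - 3/4)).

(* floor of t: Int_part t = up t - 1 is the floor *)
Definition Rloop (t : R) : vec3 := Rloop0 (t - IZR (Int_part t)).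

(* Main.v *)
Require Import Defs.
From Stdlib Require Import Reals Lra Psatz Lia ZArith.
Open Scope R_scope.

Lemma pE1 a b : -/2 <= a -> a <= b -> b <= 0 -> (/2-a^2)*(/2-b^2) <= (/2+b-a-a*b)^2.
Proof.
  intros Ha Hab Hb.
  assert (H1: 0 <= b-a) by lra. assert (H2: 0 <= -b) by lra. assert (H3: 0 <= a+/2) by lra.
  assert (0 <= (b-a)^3*(-b)^0*(a+/2)^0) by (apply Rmult_le_pos; [apply Rmult_le_pos|]; apply pow_le; assumption).
  assert (0 <= (b-a)^2*(-b)^1*(a+/2)^0) by (apply Rmult_le_pos; [apply Rmult_le_pos|]; apply pow_le; assumption).
  assert (0 <= (b-a)^2*(-b)^0*(a+/2)^1) by (apply Rmult_le_pos; [apply Rmult_le_pos|]; apply pow_le; assumption).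
  assert (0 <= (b-a)^1*(-b)^2*(a+/2)^0) by (apply Rmult_le_pos; [apply Rmult_le_pos|]; apply pow_le; assumption).
  assert (0 <= (b-a)^1*(-b)^1*(a+/2)^1) by (apply Rmult_le_pos; [apply Rmult_le_pos|]; apply pow_le; assumption).
  assert (0 <= (b-a)^1*(-b)^0*(a+/2)^2) by (apply Rmult_le_pos; [apply Rmult_le_pos|]; apply pow_le; assumption).
  lra.
Qed.

Lemma pE2 a b : -/2 <= a -> a <= b -> b <= 0 -> (/2-a^2)*(/2+b+b^2)^2 <= (/2-b^2)*(/2+b+a*b)^2.
Proof.
  intros Ha Hab Hb.
  assert (H1: 0 <= b-a) by lra. assert (H2: 0 <= -b) by lra. assert (H3: 0 <= a+/2) by lra.
  assert (0 <= (b-a)^1*(-b)^4*(a+/2)^0) by (apply Rmult_le_pos; [apply Rmult_le_pos|]; apply pow_le; assumption).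
  assert (0 <= (b-a)^3*(-b)^2*(a+/2)^0) by (apply Rmult_le_pos; [apply Rmult_le_pos|]; apply pow_le; assumption).
  assert (0 <= (b-a)^2*(-b)^2*(a+/2)^1) by (apply Rmult_le_pos; [apply Rmult_le_pos|]; apply pow_le; assumption).
  assert (0 <= (b-a)^1*(-b)^2*(a+/2)^2) by (apply Rmult_le_pos; [apply Rmult_le_pos|]; apply pow_le; assumption).
  assert (0 <= (b-a)^4*(-b)^1*(a+/2)^0) by (apply Rmult_le_pos; [apply Rmult_le_pos|]; apply pow_le; assumption).
  assert (0 <= (b-a)^3*(-b)^1*(a+/2)^1) by (apply Rmult_le_pos; [apply Rmult_le_pos|]; apply pow_le; assumption).
  assert (0 <= (b-a)^2*(-b)^1*(a+/2)^2) by (apply Rmult_le_pos; [apply Rmult_le_pos|]; apply pow_le; assumption).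
  assert (0 <= (b-a)^1*(-b)^1*(a+/2)^3) by (apply Rmult_le_pos; [apply Rmult_le_pos|]; apply pow_le; assumption).
  assert (0 <= (b-a)^2*(-b)^3*(a+/2)^0) by (apply Rmult_le_pos; [apply Rmult_le_pos|]; apply pow_le; assumption).
  assert (0 <= (b-a)^5*(-b)^0*(a+/2)^0) by (apply Rmult_le_pos; [apply Rmult_le_pos|]; apply pow_le; assumption).
  assert (0 <= (b-a)^4*(-b)^0*(a+/2)^1) by (apply Rmult_le_pos; [apply Rmult_le_pos|]; apply pow_le; assumption).
  assert (0 <= (b-a)^3*(-b)^0*(a+/2)^2) by (apply Rmult_le_pos; [apply Rmult_le_pos|]; apply pow_le; assumption).
  assert (0 <= (b-a)^2*(-b)^0*(a+/2)^3) by (apply Rmult_le_pos; [apply Rmult_le_pos|]; apply pow_le; assumption).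
  assert (0 <= (b-a)^1*(-b)^3*(a+/2)^1) by (apply Rmult_le_pos; [apply Rmult_le_pos|]; apply pow_le; assumption).
  lra.
Qed.

Lemma pE3 a b : -/2 <= a -> a <= b -> b <= 0 -> (/2-b^2)*(/2+a+a^2)^2 <= (/2-a^2)*(/2+b+a*b)^2.
Proof.
  intros Ha Hab Hb.
  assert (H1: 0 <= b-a) by lra. assert (H2: 0 <= -b) by lra. assert (H3: 0 <= a+/2) by lra.
  assert (0 <= (b-a)^2*(-b)^2*(a+/2)^0) by (apply Rmult_le_pos; [apply Rmult_le_pos|]; apply pow_le; assumption).
  assert (0 <= (b-a)^3*(-b)^1*(a+/2)^0) by (apply Rmult_le_pos; [apply Rmult_le_pos|]; apply pow_le; assumption).
  assert (0 <= (b-a)^2*(-b)^1*(a+/2)^1) by (apply Rmult_le_pos; [apply Rmult_le_pos|]; apply pow_le; assumption).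
  assert (0 <= (b-a)^4*(-b)^0*(a+/2)^0) by (apply Rmult_le_pos; [apply Rmult_le_pos|]; apply pow_le; assumption).
  assert (0 <= (b-a)^3*(-b)^0*(a+/2)^1) by (apply Rmult_le_pos; [apply Rmult_le_pos|]; apply pow_le; assumption).
  assert (0 <= (b-a)^2*(-b)^0*(a+/2)^2) by (apply Rmult_le_pos; [apply Rmult_le_pos|]; apply pow_le; assumption).
  assert (0 <= (b-a)^1*(-b)^2*(a+/2)^1) by (apply Rmult_le_pos; [apply Rmult_le_pos|]; apply pow_le; assumption).
  assert (0 <= (b-a)^1*(-b)^1*(a+/2)^2) by (apply Rmult_le_pos; [apply Rmult_le_pos|]; apply pow_le; assumption).
  assert (0 <= (b-a)^1*(-b)^0*(a+/2)^3) by (apply Rmult_le_pos; [apply Rmult_le_pos|]; apply pow_le; assumption).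
  lra.
Qed.

Lemma pM2 a b : -/2 <= a <= 0 -> -/2 <= b <= 0 -> /4*((/2-a^2)*(/2-b^2)) <= ((/2+a)*(/2+b)+/2*((1+a)*(1+b)))^2.
Proof.
  intros Ha Hb.
  assert (H1: 0 <= 1+2*a) by lra. assert (H2: 0 <= -2*a) by lra. assert (H3: 0 <= 1+2*b) by lra. assert (H4: 0 <= -2*b) by lra.
  assert (0 <= (1+2*a)^0*(-2*a)^4*(1+2*b)^2*(-2*b)^2) by (apply Rmult_le_pos; [apply Rmult_le_pos; [apply Rmult_le_pos|]|]; apply pow_le; assumption).
  assert (0 <= (1+2*a)^0*(-2*a)^4*(1+2*b)^3*(-2*b)^1) by (apply Rmult_le_pos; [apply Rmult_le_pos; [apply Rmult_le_pos|]|]; apply pow_le; assumption).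
  assert (0 <= (1+2*a)^0*(-2*a)^4*(1+2*b)^4*(-2*b)^0) by (apply Rmult_le_pos; [apply Rmult_le_pos; [apply Rmult_le_pos|]|]; apply pow_le; assumption).
  assert (0 <= (1+2*a)^1*(-2*a)^3*(1+2*b)^1*(-2*b)^3) by (apply Rmult_le_pos; [apply Rmult_le_pos; [apply Rmult_le_pos|]|]; apply pow_le; assumption).
  assert (0 <= (1+2*a)^1*(-2*a)^3*(1+2*b)^2*(-2*b)^2) by (apply Rmult_le_pos; [apply Rmult_le_pos; [apply Rmult_le_pos|]|]; apply pow_le; assumption).
  assert (0 <= (1+2*a)^1*(-2*a)^3*(1+2*b)^3*(-2*b)^1) by (apply Rmult_le_pos; [apply Rmult_le_pos; [apply Rmult_le_pos|]|]; apply pow_le; assumption).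
  assert (0 <= (1+2*a)^1*(-2*a)^3*(1+2*b)^4*(-2*b)^0) by (apply Rmult_le_pos; [apply Rmult_le_pos; [apply Rmult_le_pos|]|]; apply pow_le; assumption).
  assert (0 <= (1+2*a)^2*(-2*a)^2*(1+2*b)^0*(-2*b)^4) by (apply Rmult_le_pos; [apply Rmult_le_pos; [apply Rmult_le_pos|]|]; apply pow_le; assumption).
  assert (0 <= (1+2*a)^2*(-2*a)^2*(1+2*b)^1*(-2*b)^3) by (apply Rmult_le_pos; [apply Rmult_le_pos; [apply Rmult_le_pos|]|]; apply pow_le; assumption).
  assert (0 <= (1+2*a)^2*(-2*a)^2*(1+2*b)^2*(-2*b)^2) by (apply Rmult_le_pos; [apply Rmult_le_pos; [apply Rmult_le_pos|]|]; apply pow_le; assumption).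
  assert (0 <= (1+2*a)^2*(-2*a)^2*(1+2*b)^3*(-2*b)^1) by (apply Rmult_le_pos; [apply Rmult_le_pos; [apply Rmult_le_pos|]|]; apply pow_le; assumption).
  assert (0 <= (1+2*a)^2*(-2*a)^2*(1+2*b)^4*(-2*b)^0) by (apply Rmult_le_pos; [apply Rmult_le_pos; [apply Rmult_le_pos|]|]; apply pow_le; assumption).
  assert (0 <= (1+2*a)^3*(-2*a)^1*(1+2*b)^0*(-2*b)^4) by (apply Rmult_le_pos; [apply Rmult_le_pos; [apply Rmult_le_pos|]|]; apply pow_le; assumption).
  assert (0 <= (1+2*a)^3*(-2*a)^1*(1+2*b)^1*(-2*b)^3) by (apply Rmult_le_pos; [apply Rmult_le_pos; [apply Rmult_le_pos|]|]; apply pow_le; assumption).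
  assert (0 <= (1+2*a)^3*(-2*a)^1*(1+2*b)^2*(-2*b)^2) by (apply Rmult_le_pos; [apply Rmult_le_pos; [apply Rmult_le_pos|]|]; apply pow_le; assumption).
  assert (0 <= (1+2*a)^3*(-2*a)^1*(1+2*b)^3*(-2*b)^1) by (apply Rmult_le_pos; [apply Rmult_le_pos; [apply Rmult_le_pos|]|]; apply pow_le; assumption).
  assert (0 <= (1+2*a)^3*(-2*a)^1*(1+2*b)^4*(-2*b)^0) by (apply Rmult_le_pos; [apply Rmult_le_pos; [apply Rmult_le_pos|]|]; apply pow_le; assumption).
  assert (0 <= (1+2*a)^4*(-2*a)^0*(1+2*b)^0*(-2*b)^4) by (apply Rmult_le_pos; [apply Rmult_le_pos; [apply Rmult_le_pos|]|]; apply pow_le; assumption).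
  assert (0 <= (1+2*a)^4*(-2*a)^0*(1+2*b)^1*(-2*b)^3) by (apply Rmult_le_pos; [apply Rmult_le_pos; [apply Rmult_le_pos|]|]; apply pow_le; assumption).
  assert (0 <= (1+2*a)^4*(-2*a)^0*(1+2*b)^2*(-2*b)^2) by (apply Rmult_le_pos; [apply Rmult_le_pos; [apply Rmult_le_pos|]|]; apply pow_le; assumption).
  assert (0 <= (1+2*a)^4*(-2*a)^0*(1+2*b)^3*(-2*b)^1) by (apply Rmult_le_pos; [apply Rmult_le_pos; [apply Rmult_le_pos|]|]; apply pow_le; assumption).
  assert (0 <= (1+2*a)^4*(-2*a)^0*(1+2*b)^4*(-2*b)^0) by (apply Rmult_le_pos; [apply Rmult_le_pos; [apply Rmult_le_pos|]|]; apply pow_le; assumption).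
  lra.
Qed.

Lemma pM3 a b : -/2 <= a <= 0 -> -/2 <= b <= 0 -> ((/2+a+a^2)*(/2+b+b^2))^2 <= (/2-a^2)*(/2-b^2)*(/2+(1+a)*(1+b))^2.
Proof.
  intros Ha Hb.
  assert (H1: 0 <= 1+2*a) by lra. assert (H2: 0 <= -2*a) by lra. assert (H3: 0 <= 1+2*b) by lra. assert (H4: 0 <= -2*b) by lra.
  assert (0 <= (1+2*a)^0*(-2*a)^4*(1+2*b)^0*(-2*b)^4) by (apply Rmult_le_pos; [apply Rmult_le_pos; [apply Rmult_le_pos|]|]; apply pow_le; assumption).
  assert (0 <= (1+2*a)^0*(-2*a)^4*(1+2*b)^1*(-2*b)^3) by (apply Rmult_le_pos; [apply Rmult_le_pos; [apply Rmult_le_pos|]|]; apply pow_le; assumption).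
  assert (0 <= (1+2*a)^0*(-2*a)^4*(1+2*b)^2*(-2*b)^2) by (apply Rmult_le_pos; [apply Rmult_le_pos; [apply Rmult_le_pos|]|]; apply pow_le; assumption).
  assert (0 <= (1+2*a)^0*(-2*a)^4*(1+2*b)^3*(-2*b)^1) by (apply Rmult_le_pos; [apply Rmult_le_pos; [apply Rmult_le_pos|]|]; apply pow_le; assumption).
  assert (0 <= (1+2*a)^0*(-2*a)^4*(1+2*b)^4*(-2*b)^0) by (apply Rmult_le_pos; [apply Rmult_le_pos; [apply Rmult_le_pos|]|]; apply pow_le; assumption).
  assert (0 <= (1+2*a)^1*(-2*a)^3*(1+2*b)^0*(-2*b)^4) by (apply Rmult_le_pos; [apply Rmult_le_pos; [apply Rmult_le_pos|]|]; apply pow_le; assumption).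
  assert (0 <= (1+2*a)^1*(-2*a)^3*(1+2*b)^1*(-2*b)^3) by (apply Rmult_le_pos; [apply Rmult_le_pos; [apply Rmult_le_pos|]|]; apply pow_le; assumption).
  assert (0 <= (1+2*a)^1*(-2*a)^3*(1+2*b)^2*(-2*b)^2) by (apply Rmult_le_pos; [apply Rmult_le_pos; [apply Rmult_le_pos|]|]; apply pow_le; assumption).
  assert (0 <= (1+2*a)^1*(-2*a)^3*(1+2*b)^3*(-2*b)^1) by (apply Rmult_le_pos; [apply Rmult_le_pos; [apply Rmult_le_pos|]|]; apply pow_le; assumption).
  assert (0 <= (1+2*a)^1*(-2*a)^3*(1+2*b)^4*(-2*b)^0) by (apply Rmult_le_pos; [apply Rmult_le_pos; [apply Rmult_le_pos|]|]; apply pow_le; assumption).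
  assert (0 <= (1+2*a)^2*(-2*a)^2*(1+2*b)^0*(-2*b)^4) by (apply Rmult_le_pos; [apply Rmult_le_pos; [apply Rmult_le_pos|]|]; apply pow_le; assumption).
  assert (0 <= (1+2*a)^2*(-2*a)^2*(1+2*b)^1*(-2*b)^3) by (apply Rmult_le_pos; [apply Rmult_le_pos; [apply Rmult_le_pos|]|]; apply pow_le; assumption).
  assert (0 <= (1+2*a)^2*(-2*a)^2*(1+2*b)^2*(-2*b)^2) by (apply Rmult_le_pos; [apply Rmult_le_pos; [apply Rmult_le_pos|]|]; apply pow_le; assumption).
  assert (0 <= (1+2*a)^2*(-2*a)^2*(1+2*b)^3*(-2*b)^1) by (apply Rmult_le_pos; [apply Rmult_le_pos; [apply Rmult_le_pos|]|]; apply pow_le; assumption).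
  assert (0 <= (1+2*a)^2*(-2*a)^2*(1+2*b)^4*(-2*b)^0) by (apply Rmult_le_pos; [apply Rmult_le_pos; [apply Rmult_le_pos|]|]; apply pow_le; assumption).
  assert (0 <= (1+2*a)^3*(-2*a)^1*(1+2*b)^0*(-2*b)^4) by (apply Rmult_le_pos; [apply Rmult_le_pos; [apply Rmult_le_pos|]|]; apply pow_le; assumption).
  assert (0 <= (1+2*a)^3*(-2*a)^1*(1+2*b)^1*(-2*b)^3) by (apply Rmult_le_pos; [apply Rmult_le_pos; [apply Rmult_le_pos|]|]; apply pow_le; assumption).
  assert (0 <= (1+2*a)^3*(-2*a)^1*(1+2*b)^2*(-2*b)^2) by (apply Rmult_le_pos; [apply Rmult_le_pos; [apply Rmult_le_pos|]|]; apply pow_le; assumption).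
  assert (0 <= (1+2*a)^3*(-2*a)^1*(1+2*b)^3*(-2*b)^1) by (apply Rmult_le_pos; [apply Rmult_le_pos; [apply Rmult_le_pos|]|]; apply pow_le; assumption).
  assert (0 <= (1+2*a)^3*(-2*a)^1*(1+2*b)^4*(-2*b)^0) by (apply Rmult_le_pos; [apply Rmult_le_pos; [apply Rmult_le_pos|]|]; apply pow_le; assumption).
  assert (0 <= (1+2*a)^4*(-2*a)^0*(1+2*b)^0*(-2*b)^4) by (apply Rmult_le_pos; [apply Rmult_le_pos; [apply Rmult_le_pos|]|]; apply pow_le; assumption).
  assert (0 <= (1+2*a)^4*(-2*a)^0*(1+2*b)^1*(-2*b)^3) by (apply Rmult_le_pos; [apply Rmult_le_pos; [apply Rmult_le_pos|]|]; apply pow_le; assumption).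
  assert (0 <= (1+2*a)^4*(-2*a)^0*(1+2*b)^2*(-2*b)^2) by (apply Rmult_le_pos; [apply Rmult_le_pos; [apply Rmult_le_pos|]|]; apply pow_le; assumption).
  assert (0 <= (1+2*a)^4*(-2*a)^0*(1+2*b)^3*(-2*b)^1) by (apply Rmult_le_pos; [apply Rmult_le_pos; [apply Rmult_le_pos|]|]; apply pow_le; assumption).
  assert (0 <= (1+2*a)^4*(-2*a)^0*(1+2*b)^4*(-2*b)^0) by (apply Rmult_le_pos; [apply Rmult_le_pos; [apply Rmult_le_pos|]|]; apply pow_le; assumption).
  lra.
Qed.

Lemma pM5 a b : -/2 <= a <= 0 -> -/2 <= b <= 0 -> (/2-a^2)*(/2+b+b^2)^2 <= /2*((/2-b^2)*(1+b-a)^2).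
Proof.
  intros Ha Hb.
  assert (H1: 0 <= 1+2*a) by lra. assert (H2: 0 <= -2*a) by lra. assert (H3: 0 <= 1+2*b) by lra. assert (H4: 0 <= -2*b) by lra.
  assert (0 <= (1+2*a)^0*(-2*a)^2*(1+2*b)^0*(-2*b)^4) by (apply Rmult_le_pos; [apply Rmult_le_pos; [apply Rmult_le_pos|]|]; apply pow_le; assumption).
  assert (0 <= (1+2*a)^0*(-2*a)^2*(1+2*b)^1*(-2*b)^3) by (apply Rmult_le_pos; [apply Rmult_le_pos; [apply Rmult_le_pos|]|]; apply pow_le; assumption).
  assert (0 <= (1+2*a)^0*(-2*a)^2*(1+2*b)^2*(-2*b)^2) by (apply Rmult_le_pos; [apply Rmult_le_pos; [apply Rmult_le_pos|]|]; apply pow_le; assumption).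
  assert (0 <= (1+2*a)^0*(-2*a)^2*(1+2*b)^3*(-2*b)^1) by (apply Rmult_le_pos; [apply Rmult_le_pos; [apply Rmult_le_pos|]|]; apply pow_le; assumption).
  assert (0 <= (1+2*a)^0*(-2*a)^2*(1+2*b)^4*(-2*b)^0) by (apply Rmult_le_pos; [apply Rmult_le_pos; [apply Rmult_le_pos|]|]; apply pow_le; assumption).
  assert (0 <= (1+2*a)^1*(-2*a)^1*(1+2*b)^0*(-2*b)^4) by (apply Rmult_le_pos; [apply Rmult_le_pos; [apply Rmult_le_pos|]|]; apply pow_le; assumption).
  assert (0 <= (1+2*a)^1*(-2*a)^1*(1+2*b)^1*(-2*b)^3) by (apply Rmult_le_pos; [apply Rmult_le_pos; [apply Rmult_le_pos|]|]; apply pow_le; assumption).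
  assert (0 <= (1+2*a)^1*(-2*a)^1*(1+2*b)^2*(-2*b)^2) by (apply Rmult_le_pos; [apply Rmult_le_pos; [apply Rmult_le_pos|]|]; apply pow_le; assumption).
  assert (0 <= (1+2*a)^1*(-2*a)^1*(1+2*b)^3*(-2*b)^1) by (apply Rmult_le_pos; [apply Rmult_le_pos; [apply Rmult_le_pos|]|]; apply pow_le; assumption).
  assert (0 <= (1+2*a)^1*(-2*a)^1*(1+2*b)^4*(-2*b)^0) by (apply Rmult_le_pos; [apply Rmult_le_pos; [apply Rmult_le_pos|]|]; apply pow_le; assumption).
  assert (0 <= (1+2*a)^2*(-2*a)^0*(1+2*b)^1*(-2*b)^3) by (apply Rmult_le_pos; [apply Rmult_le_pos; [apply Rmult_le_pos|]|]; apply pow_le; assumption).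
  assert (0 <= (1+2*a)^2*(-2*a)^0*(1+2*b)^2*(-2*b)^2) by (apply Rmult_le_pos; [apply Rmult_le_pos; [apply Rmult_le_pos|]|]; apply pow_le; assumption).
  assert (0 <= (1+2*a)^2*(-2*a)^0*(1+2*b)^3*(-2*b)^1) by (apply Rmult_le_pos; [apply Rmult_le_pos; [apply Rmult_le_pos|]|]; apply pow_le; assumption).
  assert (0 <= (1+2*a)^2*(-2*a)^0*(1+2*b)^4*(-2*b)^0) by (apply Rmult_le_pos; [apply Rmult_le_pos; [apply Rmult_le_pos|]|]; apply pow_le; assumption).
  lra.
Qed.

Lemma pM6 a b : -/2 <= a <= 0 -> -/2 <= b <= 0 -> /2*((/2-a^2)*(/2+b+b^2)^2) <= (/2-b^2)*((/2+a)*(1+b)+/2*(1+a))^2.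
Proof.
  intros Ha Hb.
  assert (H1: 0 <= 1+2*a) by lra. assert (H2: 0 <= -2*a) by lra. assert (H3: 0 <= 1+2*b) by lra. assert (H4: 0 <= -2*b) by lra.
  assert (0 <= (1+2*a)^0*(-2*a)^2*(1+2*b)^0*(-2*b)^4) by (apply Rmult_le_pos; [apply Rmult_le_pos; [apply Rmult_le_pos|]|]; apply pow_le; assumption).
  assert (0 <= (1+2*a)^0*(-2*a)^2*(1+2*b)^1*(-2*b)^3) by (apply Rmult_le_pos; [apply Rmult_le_pos; [apply Rmult_le_pos|]|]; apply pow_le; assumption).
  assert (0 <= (1+2*a)^0*(-2*a)^2*(1+2*b)^2*(-2*b)^2) by (apply Rmult_le_pos; [apply Rmult_le_pos; [apply Rmult_le_pos|]|]; apply pow_le; assumption).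
  assert (0 <= (1+2*a)^0*(-2*a)^2*(1+2*b)^3*(-2*b)^1) by (apply Rmult_le_pos; [apply Rmult_le_pos; [apply Rmult_le_pos|]|]; apply pow_le; assumption).
  assert (0 <= (1+2*a)^1*(-2*a)^1*(1+2*b)^0*(-2*b)^4) by (apply Rmult_le_pos; [apply Rmult_le_pos; [apply Rmult_le_pos|]|]; apply pow_le; assumption).
  assert (0 <= (1+2*a)^1*(-2*a)^1*(1+2*b)^1*(-2*b)^3) by (apply Rmult_le_pos; [apply Rmult_le_pos; [apply Rmult_le_pos|]|]; apply pow_le; assumption).
  assert (0 <= (1+2*a)^1*(-2*a)^1*(1+2*b)^2*(-2*b)^2) by (apply Rmult_le_pos; [apply Rmult_le_pos; [apply Rmult_le_pos|]|]; apply pow_le; assumption).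
  assert (0 <= (1+2*a)^1*(-2*a)^1*(1+2*b)^3*(-2*b)^1) by (apply Rmult_le_pos; [apply Rmult_le_pos; [apply Rmult_le_pos|]|]; apply pow_le; assumption).
  assert (0 <= (1+2*a)^1*(-2*a)^1*(1+2*b)^4*(-2*b)^0) by (apply Rmult_le_pos; [apply Rmult_le_pos; [apply Rmult_le_pos|]|]; apply pow_le; assumption).
  assert (0 <= (1+2*a)^2*(-2*a)^0*(1+2*b)^0*(-2*b)^4) by (apply Rmult_le_pos; [apply Rmult_le_pos; [apply Rmult_le_pos|]|]; apply pow_le; assumption).
  assert (0 <= (1+2*a)^2*(-2*a)^0*(1+2*b)^1*(-2*b)^3) by (apply Rmult_le_pos; [apply Rmult_le_pos; [apply Rmult_le_pos|]|]; apply pow_le; assumption).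
  assert (0 <= (1+2*a)^2*(-2*a)^0*(1+2*b)^2*(-2*b)^2) by (apply Rmult_le_pos; [apply Rmult_le_pos; [apply Rmult_le_pos|]|]; apply pow_le; assumption).
  assert (0 <= (1+2*a)^2*(-2*a)^0*(1+2*b)^3*(-2*b)^1) by (apply Rmult_le_pos; [apply Rmult_le_pos; [apply Rmult_le_pos|]|]; apply pow_le; assumption).
  assert (0 <= (1+2*a)^2*(-2*a)^0*(1+2*b)^4*(-2*b)^0) by (apply Rmult_le_pos; [apply Rmult_le_pos; [apply Rmult_le_pos|]|]; apply pow_le; assumption).
  lra.
Qed.

Lemma sq_le P Q : 0 <= Q -> P^2 <= Q^2 -> P <= Q.
Proof. intros HQ H. destruct (Rle_dec P Q) as [|n]; auto. nra. Qed.

Lemma mul_nonpos x y : 0 <= x -> y <= 0 -> x * y <= 0.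
Proof. intros; nra. Qed.

Lemma hh : / sqrt 2 * / sqrt 2 = /2.
Proof. rewrite <- Rinv_mult. rewrite sqrt_sqrt; lra. Qed.

Lemma h_pos : 0 < / sqrt 2.
Proof. apply Rinv_0_lt_compat, sqrt_lt_R0; lra. Qed.

Lemma AA t : -/2 <= t <= 0 -> sqrt (/2 - t^2) * sqrt (/2 - t^2) = /2 - t^2.
Proof. intros. rewrite sqrt_sqrt; nra. Qed.

Section Cores.
Variables a b A B h : R.
Hypotheses (Ha : -/2 <= a <= 0) (Hb : -/2 <= b <= 0) (HA : 0 <= A) (HB : 0 <= B)
 (eA : A*A = /2 - a^2) (eB : B*B = /2 - b^2) (Hh : 0 < h) (eh : h*h = /2).

Lemma cE1 : a <= b -> A*B - (/2+b-a-a*b) <= 0.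
Proof.
  intro Hab. cut (A*B <= /2+b-a-a*b). lra.
  apply sq_le. nra.
  replace ((A*B)^2) with ((A*A)*(B*B)) by ring. rewrite eA, eB. apply pE1; lra.
Qed.

Lemma cM5 : A*(/2+b+b^2) - h*B*(1+b-a) <= 0.
Proof.
  cut (A*(/2+b+b^2) <= h*B*(1+b-a)). lra.
  apply sq_le. apply Rmult_le_pos; [apply Rmult_le_pos|]; lra.
  replace ((A*(/2+b+b^2))^2) with ((A*A)*(/2+b+b^2)^2) by ring.
  replace ((h*B*(1+b-a))^2) with ((h*h)*((B*B)*(1+b-a)^2)) by ring.
  rewrite eA, eB, eh. apply pM5; lra.
Qed.

Lemma cM1 : A*B - h*h - a*b <= 0.
Proof.
  rewrite eh. cut (A*B <= /2 + a*b). lra.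
  apply sq_le. nra.
  replace ((A*B)^2) with ((A*A)*(B*B)) by ring. rewrite eA, eB.
  assert (0 <= (a+b)^2) by apply pow2_ge_0. lra.
Qed.

Lemma cM4 : h*A*B - (h*h*(1+b) + a*(/2+b)) <= 0.
Proof.
  rewrite eh. cut (h*A*B <= /2*(1+b) + a*(/2+b)). lra.
  apply sq_le. nra.
  replace ((h*A*B)^2) with ((h*h)*(A*A)*(B*B)) by ring. rewrite eA, eB, eh.
  assert (0 <= (/2+a+b+a*b)^2) by apply pow2_ge_0. lra.
Qed.

Lemma cE3 : a <= b -> B*(/2+a+a^2) - A*(h*h + b*(1+a)) <= 0.
Proof.
  intro Hab. rewrite eh. cut (B*(/2+a+a^2) <= A*(/2 + b*(1+a))). lra.
  apply sq_le. apply Rmult_le_pos; nra.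
  replace ((B*(/2+a+a^2))^2) with ((B*B)*(/2+a+a^2)^2) by ring.
  replace ((A*(/2+b*(1+a)))^2) with ((A*A)*(/2+b+a*b)^2) by ring.
  rewrite eA, eB. apply pE3; lra.
Qed.

Lemma cE2 : a <= b -> A*(/2+b+b^2) - B*((1+a)*(1+b) - (/2+a)) <= 0.
Proof.
  intro Hab. cut (A*(/2+b+b^2) <= B*((1+a)*(1+b) - (/2+a))). lra.
  apply sq_le. apply Rmult_le_pos; nra.
  replace ((A*(/2+b+b^2))^2) with ((A*A)*(/2+b+b^2)^2) by ring.
  replace ((B*((1+a)*(1+b) - (/2+a)))^2) with ((B*B)*(/2+b+a*b)^2) by field.
  rewrite eA, eB. apply pE2; lra.
Qed.

Lemma cM2 : h*h*A*B - (/2+a)*(/2+b) - h*h*(1+a)*(1+b) <= 0.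
Proof.
  rewrite eh. cut (/2*(A*B) <= (/2+a)*(/2+b)+/2*((1+a)*(1+b))). lra.
  apply sq_le. nra.
  replace ((/2*(A*B))^2) with (/4*((A*A)*(B*B))) by field. rewrite eA, eB.
  apply pM2; lra.
Qed.

Lemma cM6 : h*A*(/2+b+b^2) - (/2+a)*(1+b)*B - h*h*(1+a)*B <= 0.
Proof.
  rewrite eh. cut (h*A*(/2+b+b^2) <= B*((/2+a)*(1+b)+/2*(1+a))). lra.
  apply sq_le. apply Rmult_le_pos; nra.
  replace ((h*A*(/2+b+b^2))^2) with ((h*h)*((A*A)*(/2+b+b^2)^2)) by ring.
  replace ((B*((/2+a)*(1+b)+/2*(1+a)))^2) with ((B*B)*((/2+a)*(1+b)+/2*(1+a))^2) by ring.
  rewrite eA, eB, eh. apply pM6; lra.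
Qed.

Lemma cM3 : (/2+a+a^2)*(/2+b+b^2) - h*h*A*B - A*B*(1+a)*(1+b) <= 0.
Proof.
  rewrite eh. cut ((/2+a+a^2)*(/2+b+b^2) <= A*B*(/2+(1+a)*(1+b))). lra.
  apply sq_le. apply Rmult_le_pos; [apply Rmult_le_pos|]; nra.
  replace ((A*B*(/2+(1+a)*(1+b)))^2) with ((A*A)*(B*B)*(/2+(1+a)*(1+b))^2) by ring.
  rewrite eA, eB. apply pM3; lra.
Qed.
End Cores.

Lemma r3_eq t : -/2 <= t <= 0 ->
  r3 t = (- (/ sqrt 2 * sqrt (/2 - t^2) / (1 + t)), - sqrt (/2 - t^2), (/2 + t + t^2) / (1 + t)).
Proof.
  intro Ht. unfold r3, cross, r1, r2.
  set (h := / sqrt 2). set (A := sqrt (/2 - t^2)).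
  assert (eh : h*h = /2) by apply hh.
  f_equal; [f_equal|].
  - field. lra.
  - replace (h * (h * (A / (1 + t)))) with ((h*h) * (A/(1+t))) by ring. rewrite eh. field. lra.
  - replace (h*h - t * - ((/2 + t) / (1 + t))) with (h*h + t * ((/2 + t) / (1 + t))) by ring.
    rewrite eh. field. lra.
Qed.

Ltac wrap_tac a b F E c :=
  try rewrite (r3_eq a) by lra; try rewrite (r3_eq b) by lra;
  unfold dot, rotn, rot, r1, r2;
  assert (eh : / sqrt 2 * / sqrt 2 = /2) by apply hh;
  assert (Hh : 0 < / sqrt 2) by apply h_pos;
  assert (s2 : sqrt 2 <> 0) by (apply Rgt_not_eq, sqrt_lt_R0; lra);
  assert (eA : sqrt (/2 - a^2) * sqrt (/2 - a^2) = /2 - a^2) by (apply AA; lra);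
  assert (eB : sqrt (/2 - b^2) * sqrt (/2 - b^2) = /2 - b^2) by (apply AA; lra);
  assert (HA : 0 <= sqrt (/2 - a^2)) by apply sqrt_pos;
  assert (HB : 0 <= sqrt (/2 - b^2)) by apply sqrt_pos;
  match goal with |- ?L <= 0 => replace L with (F * E) by (field; repeat split; first [assumption | lra | apply Rmult_integral_contrapositive_currified; lra]) end;
  apply mul_nonpos; [ try (apply Rmult_le_pos; [lra | left; apply Rinv_0_lt_compat; nra]) | c ].

Lemma W_E1 a b : -/2 <= a <= 0 -> -/2 <= b <= 0 -> a <= b -> dot (rotn 0 (r1 a)) (rotn 0 (r2 b)) <= 0.
Proof.
  intros Ha Hb Hab.
  wrap_tac a b (/ sqrt 2 * / (1+b)) (sqrt (/2 - a^2) * sqrt (/2 - b^2) - (/2+b-a-a*b)) ltac:(eapply cE1; try eassumption; try lra).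
Qed.

Lemma W_M5 a b : -/2 <= a <= 0 -> -/2 <= b <= 0 -> dot (rotn 0 (r1 a)) (rotn 3 (r3 b)) <= 0.
Proof.
  intros Ha Hb.
  wrap_tac a b (1 * / (1+b)) (sqrt (/2 - a^2)*(/2+b+b^2) - / sqrt 2*sqrt (/2 - b^2)*(1+b-a)) ltac:(eapply cM5; try eassumption; try lra).
Qed.

Lemma W_M1 a b : -/2 <= a <= 0 -> -/2 <= b <= 0 -> dot (rotn 0 (r1 a)) (rotn 2 (r1 b)) <= 0.
Proof.
  intros Ha Hb.
  wrap_tac a b (1 * / 1) (sqrt (/2 - a^2) * sqrt (/2 - b^2) - / sqrt 2 * / sqrt 2 - a*b) ltac:(eapply cM1; try eassumption; try lra).
Qed.

Lemma W_M4 a b : -/2 <= a <= 0 -> -/2 <= b <= 0 -> dot (rotn 0 (r1 a)) (rotn 1 (r2 b)) <= 0.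
Proof.
  intros Ha Hb.
  wrap_tac a b (1 * / (1+b)) (/ sqrt 2*sqrt (/2 - a^2)*sqrt (/2 - b^2) - (/ sqrt 2 * / sqrt 2*(1+b) + a*(/2+b))) ltac:(eapply cM4; try eassumption; try lra).
Qed.

Lemma W_E3 a b : -/2 <= a <= 0 -> -/2 <= b <= 0 -> a <= b -> dot (rotn 0 (r3 a)) (rotn 0 (r1 b)) <= 0.
Proof.
  intros Ha Hb Hab.
  wrap_tac a b (1 * / (1+a)) (sqrt (/2 - b^2)*(/2+a+a^2) - sqrt (/2 - a^2)*(/ sqrt 2 * / sqrt 2 + b*(1+a))) ltac:(eapply cE3; try eassumption; try lra).
Qed.

Lemma W_E2 a b : -/2 <= a <= 0 -> -/2 <= b <= 0 -> a <= b -> dot (rotn 0 (r2 a)) (rotn 0 (r3 b)) <= 0.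
Proof.
  intros Ha Hb Hab.
  wrap_tac a b (/ sqrt 2 * / ((1+a)*(1+b))) (sqrt (/2 - a^2)*(/2+b+b^2) - sqrt (/2 - b^2)*((1+a)*(1+b) - (/2+a))) ltac:(eapply cE2; try eassumption; try lra).
Qed.

Lemma W_M2 a b : -/2 <= a <= 0 -> -/2 <= b <= 0 -> dot (rotn 0 (r2 a)) (rotn 2 (r2 b)) <= 0.
Proof.
  intros Ha Hb.
  wrap_tac a b (1 * / ((1+a)*(1+b))) (/ sqrt 2 * / sqrt 2*sqrt (/2 - a^2)*sqrt (/2 - b^2) - (/2+a)*(/2+b) - / sqrt 2 * / sqrt 2*(1+a)*(1+b)) ltac:(eapply cM2; try eassumption; try lra).
Qed.

Lemma W_M6 a b : -/2 <= a <= 0 -> -/2 <= b <= 0 -> dot (rotn 0 (r2 a)) (rotn 1 (r3 b)) <= 0.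
Proof.
  intros Ha Hb.
  wrap_tac a b (1 * / ((1+a)*(1+b))) (/ sqrt 2*sqrt (/2 - a^2)*(/2+b+b^2) - (/2+a)*(1+b)*sqrt (/2 - b^2) - / sqrt 2 * / sqrt 2*(1+a)*sqrt (/2 - b^2)) ltac:(eapply cM6; try eassumption; try lra).
Qed.

Lemma W_M3 a b : -/2 <= a <= 0 -> -/2 <= b <= 0 -> dot (rotn 0 (r3 a)) (rotn 2 (r3 b)) <= 0.
Proof.
  intros Ha Hb.
  wrap_tac a b (1 * / ((1+a)*(1+b))) ((/2+a+a^2)*(/2+b+b^2) - / sqrt 2 * / sqrt 2*sqrt (/2 - a^2)*sqrt (/2 - b^2) - sqrt (/2 - a^2)*sqrt (/2 - b^2)*(1+a)*(1+b)) ltac:(eapply cM3; try eassumption; try lra).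
Qed.

Lemma dot_swap0 u v : dot u (rotn 0 v) = dot v (rotn 0 u).
Proof. destruct u as [[? ?] ?]; destruct v as [[? ?] ?]; simpl; ring. Qed.
Lemma dot_swap3 u v : dot u (rotn 3 v) = dot v (rotn 1 u).
Proof. destruct u as [[? ?] ?]; destruct v as [[? ?] ?]; simpl; ring. Qed.

Lemma W_E1' a b : -/2 <= a <= 0 -> -/2 <= b <= 0 -> b <= a -> dot (rotn 0 (r2 a)) (rotn 0 (r1 b)) <= 0.
Proof. intros. rewrite dot_swap0. apply W_E1; lra. Qed.
Lemma W_E2' a b : -/2 <= a <= 0 -> -/2 <= b <= 0 -> b <= a -> dot (rotn 0 (r3 a)) (rotn 0 (r2 b)) <= 0.
Proof. intros. rewrite dot_swap0. apply W_E2; lra. Qed.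
Lemma W_E3' a b : -/2 <= a <= 0 -> -/2 <= b <= 0 -> b <= a -> dot (rotn 0 (r1 a)) (rotn 0 (r3 b)) <= 0.
Proof. intros. rewrite dot_swap0. apply W_E3; lra. Qed.
Lemma W_M4' a b : -/2 <= a <= 0 -> -/2 <= b <= 0 -> dot (rotn 0 (r2 a)) (rotn 3 (r1 b)) <= 0.
Proof. intros. rewrite dot_swap3. apply W_M4; lra. Qed.
Lemma W_M5' a b : -/2 <= a <= 0 -> -/2 <= b <= 0 -> dot (rotn 0 (r3 a)) (rotn 1 (r1 b)) <= 0.
Proof. intros. replace (dot (rotn 0 (r3 a)) (rotn 1 (r1 b))) with (dot (r1 b) (rotn 3 (rotn 0 (r3 a)))) by (rewrite dot_swap3; reflexivity). apply W_M5; lra. Qed.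
Lemma W_M6' a b : -/2 <= a <= 0 -> -/2 <= b <= 0 -> dot (rotn 0 (r3 a)) (rotn 3 (r2 b)) <= 0.
Proof. intros. rewrite dot_swap3. apply W_M6; lra. Qed.

Definition piece (i : nat) (t : R) : vec3 :=
  match i with
  | 0 => rotn 0 (r1 t) | 1 => rotn 3 (r2 t) | 2 => rotn 2 (r3 t)
  | 3 => rotn 1 (r1 t) | 4 => rotn 4 (r2 t) | 5 => rotn 3 (r3 t)
  | 6 => rotn 2 (r1 t) | 7 => rotn 5 (r2 t) | 8 => rotn 4 (r3 t)
  | 9 => rotn 3 (r1 t) | 10 => rotn 6 (r2 t) | _ => rotn 5 (r3 t)
  end.

Ltac leaf k := exists k; eexists; split; [reflexivity | split; [lia | simpl INR; split; lra]].

Lemma Rloop0_dec x : 0 <= x < 1 -> exists i t, Rloop0 x = piece i t /\ (i < 12)%nat /\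
  -/2 <= t < 0 /\ x = INR i / 12 + (t + /2) / 6.
Proof.
  intro Hx. unfold Rloop0, r0.
  repeat match goal with |- context [Rlt_dec ?p ?q] => destruct (Rlt_dec p q) end;
  first [ leaf 0%nat | leaf 1%nat | leaf 2%nat | leaf 3%nat | leaf 4%nat | leaf 5%nat
        | leaf 6%nat | leaf 7%nat | leaf 8%nat | leaf 9%nat | leaf 10%nat | leaf 11%nat
        | exfalso; lra ].
Qed.

Ltac normdot :=
  match goal with |- dot (rotn ?a ?u) (rotn ?b ?v) <= 0 =>
    first [ replace (dot (rotn a u) (rotn b v)) with (dot (rotn 0 u) (rotn 0 v))
              by (destruct u as [[? ?] ?]; destruct v as [[? ?] ?]; simpl; ring)
          | replace (dot (rotn a u) (rotn b v)) with (dot (rotn 0 u) (rotn 1 v))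
              by (destruct u as [[? ?] ?]; destruct v as [[? ?] ?]; simpl; ring)
          | replace (dot (rotn a u) (rotn b v)) with (dot (rotn 0 u) (rotn 2 v))
              by (destruct u as [[? ?] ?]; destruct v as [[? ?] ?]; simpl; ring)
          | replace (dot (rotn a u) (rotn b v)) with (dot (rotn 0 u) (rotn 3 v))
              by (destruct u as [[? ?] ?]; destruct v as [[? ?] ?]; simpl; ring) ]
  end.

Ltac solve_pair :=
  cbn [piece]; normdot;
  first [ apply W_E1; lra | apply W_E2; lra | apply W_E3; lra
        | apply W_E1'; lra | apply W_E2'; lra | apply W_E3'; lra
        | apply W_M1; lra | apply W_M2; lra | apply W_M3; lra
        | apply W_M4; lra | apply W_M5; lra | apply W_M6; lra
        | apply W_M4'; lra | apply W_M5'; lra | apply W_M6'; lra ].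

Lemma core01 x y : 0 <= x < 1 -> 0 <= y < 1 -> /3 <= y - x <= 2/3 ->
  dot (Rloop0 x) (Rloop0 y) <= 0.
Proof.
  intros Hx Hy Hxy.
  destruct (Rloop0_dec x Hx) as [i [t [Ex [Hi [Ht Hxe]]]]].
  destruct (Rloop0_dec y Hy) as [j [s [Ey [Hj [Hs Hye]]]]].
  rewrite Ex, Ey.
  do 12 (destruct i as [|i]; [ do 12 (destruct j as [|j]; [ simpl INR in *; first [ exfalso; lra | solve_pair ] | ]); lia | ]).
  lia.
Qed.

Lemma dot_comm u v : dot u v = dot v u.
Proof. destruct u as [[? ?] ?]; destruct v as [[? ?] ?]; simpl; ring. Qed.

Theorem lemma3p2 : forall t s : R, t + 1/3 <= s -> s < t + 2/3 ->
  dot (Rloop t) (Rloop s) <= 0.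
Proof.
  intros t s H1 H2. unfold Rloop.
  destruct (base_Int_part t) as [Ht1 Ht2].
  destruct (base_Int_part s) as [Hs1 Hs2].
  set (m := Int_part t) in *. set (n := Int_part s) in *.
  assert (Hd : IZR (n - m) = IZR n - IZR m) by apply minus_IZR.
  assert (Hlo : (-1 < n - m)%Z) by (apply lt_IZR; lra).
  assert (Hhi : (n - m < 2)%Z) by (apply lt_IZR; lra).
  assert (Hc : (n - m = 0)%Z \/ (n - m = 1)%Z) by lia.
  destruct Hc as [Hc | Hc]; rewrite Hc in Hd; simpl in Hd.
  - apply core01; lra.
  - rewrite dot_comm. apply core01; lra.
Qed.
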